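(* Let $\mu$ be an infinite cardinal and $k\geq 1$ a natural number. Then $\mu\to_{hc}(\mu)^2_k$; that is, for every coloring $c:[\mu]^2\to k$ there exist $i<k$ and $X\subseteq\mu$ with $|X|=\mu$ such that the graph $(X,\,c^{-1}(i)\cap[X]^2)$ is highly connected.
   Context: For a set $S$ and cardinal $\theta$, $[S]^\theta$ denotes the set of subsets of $S$ of size $\theta$; the complete graph on a cardinal $\nu$ has vertex set $\nu$ and edge set $[\nu]^2$. A graph $G=(V,E)$ is $\kappa$-connected if for every set $D\subseteq V$ with $|D|<\kappa$ the graph induced on $V\setminus D$ is connected. $G$ is highly connected if it is $|V|$-connected. For cardinals $\nu,\mu,\lambda$, write $\nu\to_{hc}(\mu)^2_\lambda$ if for every $c:[\nu]^2\to\lambda$ there are $\xi<\lambda$ and $X\in[\nu]^\mu$ such that $(X,c^{-1}(\xi)\cap[X]^2)$ is highly connected. *)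

(* Defs.v *)
(* Cardinals are represented by types / subsets (predicates). *)
From Stdlib Require Import List Relations Classical.

Definition card_le {S T : Type} (A : S -> Prop) (B : T -> Prop) : Prop :=
  exists f : S -> T,
    (forall x, A x -> B (f x)) /\
    (forall x y, A x -> A y -> f x = f y -> x = y).

Definition card_eq {S T : Type} (A : S -> Prop) (B : T -> Prop) : Prop :=
  exists f : S -> T,
    (forall x, A x -> B (f x)) /\
    (forall x y, A x -> A y -> f x = f y -> x = y) /\
    (forall y, B y -> exists x, A x /\ f x = y).

Definition card_lt {S T : Type} (A : S -> Prop) (B : T -> Prop) : Prop :=
  card_le A B /\ ~ card_le B A.

Definition infinite_type (T : Type) : Prop :=
  ~ exists l : list T, forall x : T, In x l.

Definition induced_edge {T : Type} (V : T -> Prop) (E : T -> T -> Prop) : T -> T -> Prop :=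
  fun x y => V x /\ V y /\ E x y.

Definition connected {T : Type} (V : T -> Prop) (E : T -> T -> Prop) : Prop :=
  forall x y, V x -> V y -> clos_refl_trans T (induced_edge V E) x y.

(* G = (V, E) is kappa-connected, where kappa = |K|: deleting any D subset of V
   with |D| < kappa leaves a connected induced graph. *)
Definition kappa_connected {T U : Type} (K : U -> Prop) (V : T -> Prop) (E : T -> T -> Prop) : Prop :=
  forall D : T -> Prop, (forall x, D x -> V x) -> card_lt D K ->
    connected (fun x => V x /\ ~ D x) E.

Definition highly_connected {T : Type} (V : T -> Prop) (E : T -> T -> Prop) : Prop :=
  kappa_connected V V E.

(* edges of colour i of a colouring c of unordered pairs (given as a
   symmetric function on pairs of distinct elements) *)
Definition colour_class {T : Type} (c : T -> T -> nat) (i : nat) : T -> T -> Prop :=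
  fun x y => x <> y /\ c x y = i.

(* Main.v *)
Require Import Defs.
From Stdlib Require Import List Relations Classical.
From Stdlib Require Import ClassicalEpsilon FunctionalExtensionality PropExtensionality Lia PeanoNat.
From mathcomp Require all_boot classical_sets cardinality.

Module ZW.
Import all_boot boolp classical_sets cardinality.
Local Open Scope classical_set_scope.
Local Open Scope card_scope.

Lemma zorn_sets (U : Type) (P : (U -> Prop) -> Prop) :
  (forall F : (U -> Prop) -> Prop, (forall X, F X -> P X) ->
     (forall X Y, F X -> F Y -> (forall u, X u -> Y u) \/ (forall u, Y u -> X u)) ->
     P (fun u => exists X, F X /\ X u)) ->
  exists A, P A /\ forall B, (forall u, A u -> B u) -> P B -> forall u, B u -> A u.
Proof.
move=> H.
have [|A [PA Amax]] := @Zorn_bigcup U P.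
  move=> F FP Ftot.
  have -> : (\bigcup_(X in F) X) = (fun u => exists X, F X /\ X u).
    by apply: boolp.funext => u; apply: boolp.propext; split => [[X ? ?]|[X [? ?]]]; exists X.
  by apply: H => // X Y FX FY; apply: Ftot.
exists A; split => // B AB PB u Bu.
apply: NNPP => Au; apply: (Amax B) => //; split => // BA.
exact: Au (BA _ Bu).
Qed.

Lemma cb_aux (T : Type) (X : set T) (g : T -> T) : (forall t, X (g t)) -> (forall a b, g a = g b -> a = b) ->
  X #= [set: T].
Proof.
move=> gX ginj.
apply: Cantor_Bernstein; first exact: card_leT.
have h1 : g @` [set: T] #= [set: T].
  by apply: inj_card_eq => x y _ _; apply: ginj.
rewrite -(card_le_eql h1).
by apply: subset_card_le => _ [t _ <-].
Qed.

Lemma cb_aux2 (T : Type) (X : set T) (g : T -> T) : (forall t, X (g t)) -> (forall a b, g a = g b -> a = b) ->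
  exists f : T -> T, (forall x y, X x -> X y -> f x = f y -> x = y) /\ (forall y, exists x, X x /\ f x = y).
Proof.
move=> gX ginj.
have /card_bijP[f fb] := @cb_aux T X g gX ginj.
case: fb => h fh hf.
pose F (x : T) : T := match excluded_middle_informative (X x) with
  | left Xx => val (f (SigSub (mem_set Xx))) | right _ => x end.
exists F; split.
  move=> x y Xx Xy; rewrite /F.
  case: excluded_middle_informative => // Xx'.
  case: excluded_middle_informative => // Xy' /val_inj /(can_inj fh).
  by move/(congr1 val).
move=> y.
have Ty : y \in [set: T] by rewrite in_setE.
set s := h (SigSub Ty).
exists (val s); split; first by apply: set_mem; exact: valP s.
rewrite /F; case: excluded_middle_informative => [Xs|]; last first.
  by move=> nXs; exfalso; apply: nXs; apply: set_mem; exact: valP s.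
have -> : SigSub (mem_set Xs) = s by apply: val_inj.
by rewrite /s hf.
Qed.
End ZW.

Definition inf {T} (S : T -> Prop) := forall l : list T, exists x, S x /\ ~ In x l.

Lemma choice_d {X Y} (d : X -> Y) (A : X -> Prop) (R : X -> Y -> Prop) :
  (forall x, A x -> exists y, R x y) -> exists f : X -> Y, forall x, A x -> R x (f x).
Proof.
  intro H.
  assert (H' : forall x, exists y, A x -> R x y).
  { intro x. destruct (classic (A x)) as [Ax|nAx].
    - destruct (H x Ax) as [y Hy]. exists y. auto.
    - exists (d x). intro; contradiction. }
  exists (fun x => proj1_sig (constructive_indefinite_description _ (H' x))).
  intros x Ax. exact (proj2_sig (constructive_indefinite_description _ (H' x)) Ax).
Qed.

Lemma card_le_tr {S T U} (A : S -> Prop) (B : T -> Prop) (C : U -> Prop) :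
  card_le A B -> card_le B C -> card_le A C.
Proof.
  intros [f [Hf If]] [g [Hg Ig]]. exists (fun x => g (f x)). split.
  - intros x Ax. apply Hg, Hf, Ax.
  - intros x y Ax Ay E. apply If; [auto|auto|]. apply Ig; auto.
Qed.

Fixpoint glist {T} (pick : list T -> T) (n : nat) : list T :=
  match n with 0 => nil | S n' => pick (glist pick n') :: glist pick n' end.

Lemma nat_inj {T} (S : T -> Prop) : inf S ->
  exists nu : nat -> T, (forall n, S (nu n)) /\ (forall n m, nu n = nu m -> n = m).
Proof.
  intro H. destruct (H nil) as [x0 _].
  destruct (choice_d (fun _ => x0) (fun _ => True) (fun l x => S x /\ ~ In x l)) as [pick Hp].
  { intros l _. apply H. }
  exists (fun n => pick (glist pick n)). split.
  - intro n. apply (Hp _ I).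
  - assert (Hin : forall n m, m < n -> In (pick (glist pick m)) (glist pick n)).
    { induction n; intros m Hm; [lia|]. simpl.
      destruct (Nat.eq_dec m n) as [->|Hne]; [left; reflexivity|]. right. apply IHn. lia. }
    intros n m E. destruct (Nat.lt_total n m) as [h|[h|h]]; auto.
    + exfalso. apply (proj2 (Hp (glist pick m) I)). rewrite <- E. apply Hin; auto.
    + exfalso. apply (proj2 (Hp (glist pick n) I)). rewrite E. apply Hin; auto.
Qed.

Lemma inf_of_type {T} : infinite_type T -> inf (fun _ : T => True).
Proof.
  intros H l. apply NNPP; intro C. apply H. exists l. intro x. apply NNPP; intro nx.
  apply C. exists x; auto.
Qed.

Lemma fin_transfer {T} (A B : T -> Prop) l : card_le B A -> (forall x, A x -> In x l) ->
  exists l', forall x, B x -> In x l'.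
Proof.
  intros [j [Hj Ij]] Hl.
  destruct (choice_d (fun y : T => y) (fun y => exists x, B x /\ j x = y) (fun y x => B x /\ j x = y))
    as [h Hh].
  { intros y Hy; exact Hy. }
  exists (map h l). intros x Bx.
  assert (E : h (j x) = x).
  { destruct (Hh (j x) (ex_intro _ x (conj Bx eq_refl))) as [B1 E1]. apply Ij; auto. }
  rewrite <- E. apply in_map. apply Hl. apply Hj; auto.
Qed.

Lemma not_inf {T} (S : T -> Prop) : ~ inf S -> exists l, forall x, S x -> In x l.
Proof.
  intro H. apply NNPP; intro C. apply H. intro l. apply NNPP; intro C2. apply C. exists l.
  intros x Sx. apply NNPP; intro nx. apply C2. exists x; auto.
Qed.

Lemma compar {T} (A B : T -> Prop) : card_le A B \/ card_le B A.
Proof.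
  set (P := fun G : T*T -> Prop => (forall p, G p -> A (fst p) /\ B (snd p)) /\
    (forall p q, G p -> G q -> fst p = fst q -> snd p = snd q) /\
    (forall p q, G p -> G q -> snd p = snd q -> fst p = fst q)).
  destruct (ZW.zorn_sets (T*T) P) as [G [[G1 [G2 G3]] Gmax]].
  { intros F FP Fch. split; [|split].
    - intros p [X [FX Xp]]. destruct (FP X FX) as [h _]. apply h; auto.
    - intros p q [X [FX Xp]] [Y [FY Yq]] E. destruct (Fch X Y FX FY) as [s|s].
      + destruct (FP Y FY) as [_ [h _]]. apply (h p q); auto.
      + destruct (FP X FX) as [_ [h _]]. apply (h p q); auto.
    - intros p q [X [FX Xp]] [Y [FY Yq]] E. destruct (Fch X Y FX FY) as [s|s].
      + destruct (FP Y FY) as [_ [_ h]]. apply (h p q); auto.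
      + destruct (FP X FX) as [_ [_ h]]. apply (h p q); auto. }
  destruct (classic (forall a, A a -> exists y, G (a,y))) as [HA|HA].
  - left. destruct (choice_d (fun x => x) A (fun a y => G (a,y)) HA) as [f Hf].
    exists f. split.
    + intros x Ax. exact (proj2 (G1 _ (Hf x Ax))).
    + intros x y Ax Ay E. apply (G3 (x, f x) (y, f y)); auto.
  - destruct (classic (forall b, B b -> exists x, G (x,b))) as [HB|HB].
    + right. destruct (choice_d (fun x => x) B (fun b x => G (x,b)) HB) as [f Hf].
      exists f. split.
      * intros x Bx. exact (proj1 (G1 _ (Hf x Bx))).
      * intros x y Bx By E. apply (G2 (f x, x) (f y, y)); auto.
    + exfalso. apply not_all_ex_not in HA. destruct HA as [a Ha].
      apply imply_to_and in Ha. destruct Ha as [Aa na].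
      apply not_all_ex_not in HB. destruct HB as [b Hb].
      apply imply_to_and in Hb. destruct Hb as [Bb nb].
      set (G' := fun p => G p \/ p = (a,b)).
      assert (PG' : P G').
      { split; [|split].
        - intros p [Gp| ->]; auto.
        - intros p q [Gp| ->] [Gq| ->] E; auto.
          + exfalso. apply na. exists (snd p). destruct p; simpl in *; subst; auto.
          + exfalso. apply na. exists (snd q). destruct q; simpl in *; subst; auto.
        - intros p q [Gp| ->] [Gq| ->] E; auto.
          + exfalso. apply nb. exists (fst p). destruct p; simpl in *; subst; auto.
          + exfalso. apply nb. exists (fst q). destruct q; simpl in *; subst; auto. }
      apply na. exists b. apply (Gmax G' (fun u h => or_introl h) PG' (a,b) (or_intror eq_refl)).
Qed.

Definition b2n (b : bool) : nat := if b then 1 else 0.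

Lemma b2n_inj n m b b' : 2 * n + b2n b = 2 * m + b2n b' -> n = m /\ b = b'.
Proof. destruct b, b'; simpl; intros; split; auto; lia. Qed.

Lemma doubling {T} (A : T -> Prop) : inf A ->
  exists d : T*bool -> T, (forall p, A (fst p) -> A (d p)) /\
    (forall p q, A (fst p) -> A (fst q) -> d p = d q -> p = q).
Proof.
  intro IA.
  set (P := fun G : (T*bool)*T -> Prop =>
    (forall p, G p -> A (fst (fst p)) /\ A (snd p)) /\
    (forall p q, G p -> G q -> fst p = fst q -> snd p = snd q) /\
    (forall p q, G p -> G q -> snd p = snd q -> fst p = fst q) /\
    (forall s b y b', G ((s,b),y) -> exists y', G ((s,b'),y')) /\
    (forall p, G p -> exists y', G ((snd p, true), y'))).
  destruct (ZW.zorn_sets _ P) as [G [[G1 [G2 [G3 [G4 G5]]]] Gmax]].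
  { intros F FP Fch. split; [|split; [|split; [|split]]].
    - intros p [X [FX Xp]]. destruct (FP X FX) as [h _]. apply h; auto.
    - intros p q [X [FX Xp]] [Y [FY Yq]] E. destruct (Fch X Y FX FY) as [s|s].
      + destruct (FP Y FY) as [_ [h _]]. apply (h p q); auto.
      + destruct (FP X FX) as [_ [h _]]. apply (h p q); auto.
    - intros p q [X [FX Xp]] [Y [FY Yq]] E. destruct (Fch X Y FX FY) as [s|s].
      + destruct (FP Y FY) as [_ [_ [h _]]]. apply (h p q); auto.
      + destruct (FP X FX) as [_ [_ [h _]]]. apply (h p q); auto.
    - intros s b y b' [X [FX Xp]]. destruct (FP X FX) as [_ [_ [_ [h _]]]].
      destruct (h s b y b' Xp) as [y' Hy']. exists y'. exists X; auto.
    - intros p [X [FX Xp]]. destruct (FP X FX) as [_ [_ [_ [_ h]]]].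
      destruct (h p Xp) as [y' Hy']. exists y'. exists X; auto. }
  set (S := fun x => exists y, G ((x,true),y)).
  assert (NI : ~ inf (fun x => A x /\ ~ S x)).
  { intro I2. destruct (nat_inj _ I2) as [nu' [Hnu Inu]].
    set (G' := fun p => G p \/ exists n b, p = ((nu' n, b), nu' (2 * n + b2n b))).
    assert (notS : forall n b y, ~ G ((nu' n, b), y)).
    { intros n b y Gp. destruct (G4 _ _ _ true Gp) as [y' Hy']. apply (proj2 (Hnu n)). exists y'; auto. }
    assert (notV : forall n p, G p -> snd p <> nu' n).
    { intros n p Gp E. destruct (G5 p Gp) as [y' Hy']. rewrite E in Hy'. apply (proj2 (Hnu n)). exists y'; auto. }
    assert (PG' : P G').
    { split; [|split; [|split; [|split]]].
      - intros p [Gp|[n [b ->]]]; [apply G1; auto|]. simpl. split; apply Hnu.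
      - intros p q [Gp|[n [b ->]]] [Gq|[m [b' ->]]] E; simpl in *.
        + apply G2; auto.
        + exfalso. destruct p as [[s c0] y]. simpl in E. injection E as -> ->. eapply notS; eauto.
        + exfalso. destruct q as [[s c0] y]. simpl in E. injection E as <- <-. eapply notS; eauto.
        + injection E as E1 ->. apply Inu in E1. subst. reflexivity.
      - intros p q [Gp|[n [b ->]]] [Gq|[m [b' ->]]] E; simpl in *.
        + apply G3; auto.
        + exfalso. eapply notV; eauto.
        + exfalso. eapply notV; eauto.
        + apply Inu in E. apply b2n_inj in E. destruct E as [-> ->]. reflexivity.
      - intros s b y b' [Gp|[n [b0 E]]].
        + destruct (G4 s b y b' Gp) as [y' Hy']. exists y'. left; auto.
        + injection E as -> -> ->. exists (nu' (2 * n + b2n b')). right. exists n, b'. reflexivity.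
      - intros p [Gp|[n [b ->]]].
        + destruct (G5 p Gp) as [y' Hy']. exists y'. left; auto.
        + simpl. exists (nu' (2 * (2 * n + b2n b) + b2n true)). right.
          exists (2 * n + b2n b), true. reflexivity. }
    assert (Hin : G' ((nu' 0, true), nu' (2 * 0 + b2n true))) by (right; exists 0, true; reflexivity).
    apply (Gmax G' (fun u h => or_introl h) PG') in Hin. eapply notS; eauto. }
  destruct (not_inf _ NI) as [l Hl].
  destruct (nat_inj A IA) as [nu [Hnu Inu]].
  destruct (choice_d fst (fun p => S (fst p)) (fun p y => G (p,y))) as [f Hf].
  { intros [x b] [y Hy]. simpl in *. destruct (G4 _ _ _ b Hy) as [y' Hy']. exists y'. auto. }
  destruct (choice_d (fun _ => 0) (fun x => A x /\ ~ S x)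
     (fun x i => i < length l /\ nth i l x = x)) as [idx Hidx].
  { intros x Hx. apply In_nth. apply Hl; auto. }
  destruct (choice_d (fun _ => 0) (fun y => exists n, y = nu n) (fun y n => y = nu n)) as [phi Hphi].
  { intros y H; exact H. }
  set (m := 2 * length l).
  set (psi := fun y => if excluded_middle_informative (exists n, y = nu n) then nu (phi y + m) else y).
  assert (psiA : forall y, A y -> A (psi y)).
  { intros y Ay. unfold psi. destruct excluded_middle_informative; auto. }
  assert (psiI : forall x y, psi x = psi y -> x = y).
  { intros x y. unfold psi.
    destruct (excluded_middle_informative (exists n, x = nu n)) as [hx|hx];
    destruct (excluded_middle_informative (exists n, y = nu n)) as [hy|hy]; intro E.
    - apply Inu in E. rewrite (Hphi x hx), (Hphi y hy). f_equal. lia.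
    - exfalso. apply hy. eexists; symmetry; eauto.
    - exfalso. apply hx. eexists; eauto.
    - exact E. }
  assert (psiL : forall y j, j < m -> psi y <> nu j).
  { intros y j Hj. unfold psi. destruct excluded_middle_informative as [h|h]; intro E.
    - apply Inu in E. lia.
    - apply h. eexists; eauto. }
  exists (fun p => if excluded_middle_informative (S (fst p)) then psi (f p)
                   else nu (2 * idx (fst p) + b2n (snd p))).
  split.
  - intros p Ap. destruct excluded_middle_informative as [h|h].
    + apply psiA. exact (proj2 (G1 _ (Hf p h))).
    + apply Hnu.
  - intros [x b] [y b'] Ax Ay. simpl in *.
    destruct (excluded_middle_informative (S x)) as [hx|hx];
    destruct (excluded_middle_informative (S y)) as [hy|hy]; intro E.
    + apply psiI in E. apply (G3 ((x,b), f (x,b)) ((y,b'), f (y,b')));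
        [apply (Hf (x,b)); auto | apply (Hf (y,b')); auto | exact E].
    + exfalso. destruct (Hidx y (conj Ay hy)) as [H1 _].
      apply (psiL (f (x,b)) (2 * idx y + b2n b')); [unfold m; destruct b'; simpl; lia | exact E].
    + exfalso. destruct (Hidx x (conj Ax hx)) as [H1 _].
      apply (psiL (f (y,b')) (2 * idx x + b2n b)); [unfold m; destruct b; simpl; lia | exact (eq_sym E)].
    + apply Inu in E. apply b2n_inj in E. destruct E as [E ->].
      destruct (Hidx x (conj Ax hx)) as [Hx1 Hx2].
      destruct (Hidx y (conj Ay hy)) as [Hy1 Hy2].
      f_equal. rewrite <- Hx2, <- Hy2, E. apply nth_indep. rewrite <- E. auto.
Qed.

Lemma Kp {T} (A B : T -> Prop) : inf (fun _ : T => True) -> (forall x, A x \/ B x) ->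
  card_le B A -> card_le (fun _ : T => True) A.
Proof.
  intros HT Hcov HBA. pose proof HBA as [j [Hj Ij]].
  destruct (classic (inf A)) as [IA|NA].
  - destruct (doubling A IA) as [d [Hd Id]].
    assert (HA : forall x, A (fst (if excluded_middle_informative (A x) then (x,true) else (j x,false)))).
    { intro x. destruct (excluded_middle_informative (A x)); simpl; auto.
      apply Hj. destruct (Hcov x); tauto. }
    exists (fun x => d (if excluded_middle_informative (A x) then (x,true) else (j x,false))).
    split.
    + intros x _. apply Hd, HA.
    + intros x y _ _ E. apply Id in E; [|apply HA|apply HA].
      destruct (excluded_middle_informative (A x)) as [ax|ax];
      destruct (excluded_middle_informative (A y)) as [ay|ay]; injection E; try discriminate; auto.
      intros E1. apply Ij; auto.
      * destruct (Hcov x); tauto.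
      * destruct (Hcov y); tauto.
  - destruct (not_inf _ NA) as [l Hl].
    destruct (fin_transfer A B l HBA Hl) as [l' Hl'].
    exfalso. destruct (HT (l ++ l')) as [x [_ nx]]. apply nx. apply in_or_app.
    destruct (Hcov x); auto.
Qed.

Lemma K2 {T} (A B : T -> Prop) : inf (fun _ : T => True) -> (forall x, A x \/ B x) ->
  card_le (fun _ : T => True) A \/ card_le (fun _ : T => True) B.
Proof.
  intros HT Hcov. destruct (compar A B) as [h|h].
  - right. apply (Kp B A HT); auto. intro x; destruct (Hcov x); auto.
  - left. apply (Kp A B HT); auto.
Qed.

Lemma Kgen {T} (X Y : T -> Prop) : inf (fun _ : T => True) ->
  card_le (fun _ : T => True) (fun x => X x \/ Y x) ->
  card_le (fun _ : T => True) X \/ card_le (fun _ : T => True) Y.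
Proof.
  intros HT [g [Hg Ig]].
  destruct (K2 (fun t => X (g t)) (fun t => Y (g t)) HT (fun t => Hg t I)) as [[f [Hf If]]|[f [Hf If]]].
  - left. exists (fun t => g (f t)). split.
    + intros t _. exact (Hf t I).
    + intros a b _ _ E. apply (If a b I I). apply (Ig _ _ I I E).
  - right. exists (fun t => g (f t)). split.
    + intros t _. exact (Hf t I).
    + intros a b _ _ E. apply (If a b I I). apply (Ig _ _ I I E).
Qed.

Lemma zorn_above {U} (P : (U -> Prop) -> Prop) (base : U -> Prop) (u0 : U) :
  base u0 -> P base ->
  (forall F : (U -> Prop) -> Prop, (forall X, F X -> P X /\ (forall u, base u -> X u)) ->
     (forall X Y, F X -> F Y -> (forall u, X u -> Y u) \/ (forall u, Y u -> X u)) ->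
     (exists X, F X) -> P (fun u => exists X, F X /\ X u)) ->
  exists A, P A /\ (forall u, base u -> A u) /\
    forall B, (forall u, A u -> B u) -> P B -> forall u, B u -> A u.
Proof.
  intros Hb0 Pb Hch.
  set (P' := fun X : U -> Prop => (forall u, ~ X u) \/ (P X /\ forall u, base u -> X u)).
  destruct (ZW.zorn_sets U P') as [A [PA Amax]].
  { intros F FP Fch.
    destruct (classic (exists X, F X /\ exists u, X u)) as [[X0 [FX0 [u1 Xu1]]] | Hn].
    - right.
      set (F' := fun X => F X /\ exists u, X u).
      assert (Eq : (fun u => exists X, F X /\ X u) = (fun u => exists X, F' X /\ X u)).
      { apply functional_extensionality. intro u. apply propositional_extensionality. split.
        - intros [X [FX Xu]]. exists X. split; auto. split; auto. exists u; auto.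
        - intros [X [[FX _] Xu]]. exists X; auto. }
      assert (HF' : forall X, F' X -> P X /\ (forall u, base u -> X u)).
      { intros X [FX [u Xu]]. destruct (FP X FX) as [h|h]; auto. exfalso; apply (h u Xu). }
      assert (F'X0 : F' X0) by (unfold F'; split; auto; exists u1; auto).
      rewrite Eq. split.
      + apply Hch; [exact HF' | | exists X0; exact F'X0].
        intros X Y [FX _] [FY _]. apply Fch; auto.
      + intros u bu. exists X0. split; [exact FX0|].
        apply (HF' X0 F'X0); auto.
    - left. intros u [X [FX Xu]]. apply Hn. exists X. split; auto. exists u; auto. }
  destruct PA as [Aempty | [PA bA]].
  - exfalso. apply (Aempty u0). apply (Amax base); auto.
    + intros u Au. exfalso. apply (Aempty u Au).
    + right. split; auto.
  - exists A. split; auto. split; auto. intros B AB PB. apply Amax; auto. right. split; auto.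
Qed.

Definition small {T} (X : T -> Prop) := ~ card_le (fun _ : T => True) X.

Lemma small_empty {T} : inf (fun _ : T => True) -> small (fun _ : T => False).
Proof. intros HT [f [Hf _]]. destruct (HT nil) as [x _]. exact (Hf x I). Qed.

Lemma ultra_ideal {T} : inf (fun _ : T => True) -> exists I : (T -> Prop) -> Prop,
  (forall X, small X -> I X) /\ (forall X Y, I X -> (forall u, Y u -> X u) -> I Y) /\
  (forall X Y, I X -> I Y -> I (fun u => X u \/ Y u)) /\ ~ I (fun _ => True) /\
  (forall X, I X \/ I (fun u => ~ X u)).
Proof.
  intro HT.
  set (Pid := fun I : (T -> Prop) -> Prop => (forall X Y, I X -> (forall u, Y u -> X u) -> I Y) /\
    (forall X Y, I X -> I Y -> I (fun u => X u \/ Y u)) /\ ~ I (fun _ => True)).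
  destruct (zorn_above Pid small (fun _ => False) (small_empty HT)) as [I [[I1 [I2 I3]] [Ib Imax]]].
  - split; [|split].
    + intros X Y sX YX [f [Hf If]]. apply sX. exists f. split; auto.
    + intros X Y sX sY H. destruct (Kgen X Y HT H); auto.
    + intro H. apply H. exists (fun x => x). split; auto.
  - intros F FP Fch [X0 FX0]. split; [|split].
    + intros X Y [I0 [FI0 I0X]] YX. exists I0. split; auto. destruct (FP I0 FI0) as [[h _] _]. eauto.
    + intros X Y [I0 [FI0 I0X]] [I1 [FI1 I1Y]]. destruct (Fch I0 I1 FI0 FI1) as [s|s].
      * exists I1. split; auto. destruct (FP I1 FI1) as [[_ [h _]] _]. apply h; auto.
      * exists I0. split; auto. destruct (FP I0 FI0) as [[_ [h _]] _]. apply h; auto.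
    + intros [I0 [FI0 I0T]]. destruct (FP I0 FI0) as [[_ [_ h]] _]. auto.
  - exists I. split; [exact Ib|]. split; [exact I1|]. split; [exact I2|]. split; [exact I3|].
    intro A. apply NNPP; intro H. apply not_or_and in H as [nA nCA].
    set (J := fun X : T -> Prop => exists Y, I Y /\ forall u, X u -> Y u \/ A u).
    assert (PJ : Pid J).
    { split; [|split].
      - intros X Y [Z [IZ HZ]] YX. exists Z. split; auto.
      - intros X Y [Z1 [IZ1 H1]] [Z2 [IZ2 H2]]. exists (fun u => Z1 u \/ Z2 u). split; [apply I2; auto|].
        intros u [Xu|Yu]; [destruct (H1 u Xu)|destruct (H2 u Yu)]; auto.
      - intros [Z [IZ HZ]]. apply nCA. apply (I1 Z); auto. intros u nAu.
        destruct (HZ u Logic.I); tauto. }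
    apply nA. apply (Imax J); auto.
    + intros X IX. exists X. split; auto.
    + exists (fun _ => False). split; [apply Ib, small_empty, HT|]. auto.
Qed.

Theorem mainTheorem1 (T : Type) (k : nat) :
  infinite_type T -> 1 <= k ->
  forall c : T -> T -> nat,
    (forall x y, x <> y -> c x y = c y x) ->
    (forall x y, x <> y -> c x y < k) ->
    exists i, i < k /\
      exists X : T -> Prop,
        card_eq X (fun _ : T => True) /\
        highly_connected X (colour_class c i).
Proof.
  intros HinfT Hk c Hsym Hlt.
  pose proof (inf_of_type HinfT) as HT.
  destruct (ultra_ideal HT) as [Id [Is [Idn [Iu [IT Iult]]]]].
  assert (big_le : forall X, ~ Id X -> card_le (fun _ : T => True) X).
  { intros X H. apply NNPP. intro C. apply H, Is, C. }
  assert (big_inter : forall X Y, ~ Id X -> ~ Id Y -> ~ Id (fun u => X u /\ Y u)).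
  { intros X Y bX bY H. destruct (Iult Y) as [IY|ICY]; [contradiction|].
    apply bX. apply (Idn (fun u => (X u /\ Y u) \/ ~ Y u)); [apply Iu; auto|].
    intros u Xu. destruct (classic (Y u)); auto. }
  assert (big_mono : forall X Y, ~ Id X -> (forall u, X u -> Y u) -> ~ Id Y).
  { intros X Y bX XY IY. apply bX. apply (Idn Y); auto. }
  assert (part : forall n (P : nat -> T -> Prop), ~ Id (fun x => exists i, i < n /\ P i x) ->
             exists i, i < n /\ ~ Id (P i)).
  { induction n; intros P H.
    - exfalso. apply H. apply (Idn (fun _ => False)); [apply Is, small_empty, HT|].
      intros u [i [Hi _]]. lia.
    - destruct (classic (Id (P n))) as [IPn|nIPn]; [|exists n; split; [lia|auto]].
      destruct (IHn P) as [i [Hi Hb]]; [| exists i; split; [lia|auto]].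
      intro Hn. apply H. apply (Idn (fun u => (exists i, i < n /\ P i u) \/ P n u)); [apply Iu; auto|].
      intros u [i [Hi Pi]]. destruct (Nat.lt_ge_cases i n) as [h|h].
      + left. exists i; auto.
      + right. assert (i = n) by lia. subst; auto. }
  assert (single : forall x, Id (fun z => z = x)).
  { intro x. apply Is. intros [f [Hf If]].
    destruct (HT nil) as [x1 _]. destruct (HT (x1 :: nil)) as [x2 [_ n2]].
    apply n2. left. apply If; auto. rewrite (Hf x1 Logic.I), (Hf x2 Logic.I). reflexivity. }
  set (N := fun i x z => z <> x /\ c x z = i).
  assert (Hx : forall x, exists i, i < k /\ ~ Id (N i x)).
  { intro x. apply part.
    assert (bC : ~ Id (fun z => z <> x)).
    { intro H. apply IT. apply (Idn (fun u => u = x \/ u <> x)); [apply Iu; auto|].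
      intros u _. apply classic. }
    apply (big_mono _ _ bC). intros z Hz. exists (c x z). split; [apply Hlt; auto|].
    unfold N. split; auto. }
  set (Xs := fun i x => ~ Id (N i x)).
  destruct (part k Xs) as [i [Hi bXi]].
  { apply (big_mono (fun _ => True)); auto. intros u _. destruct (Hx u) as [i [Hi Hb]].
    exists i; auto. }
  exists i. split; [exact Hi|]. exists (Xs i). split.
  - destruct (big_le _ bXi) as [g [Hg Ig]].
    destruct (ZW.cb_aux2 T (Xs i) g (fun t => Hg t Logic.I) (fun a b E => Ig a b Logic.I Logic.I E))
      as [f [If Sf]].
    exists f. split; [auto|]. split; [exact If|]. intros y _. apply Sf.
  - intros D HD [_ HnotX] x y [Xx nDx] [Xy nDy].
    destruct (classic (x = y)) as [<-|nxy]; [apply rt_refl|].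
    set (C := fun z => (N i x z /\ N i y z) /\ Xs i z).
    assert (bC : ~ Id C) by (apply big_inter; [apply big_inter|]; auto).
    destruct (classic (exists z, C z /\ ~ D z)) as [[z [[[Nxz Nyz] Xz] nDz]] | Hno].
    + destruct Nxz as [zx cxz]. destruct Nyz as [zy cyz].
      apply rt_trans with z; apply rt_step; unfold induced_edge, colour_class.
      * split; [split; auto|]. split; [split; auto|]. split; auto.
      * split; [split; auto|]. split; [split; auto|]. split; auto.
        rewrite Hsym; auto.
    + exfalso. apply HnotX.
      assert (bD : ~ Id D).
      { apply (big_mono C); auto. intros u Cu. apply NNPP. intro nDu. apply Hno. exists u; auto. }
      apply (card_le_tr _ (fun _ : T => True)); [|apply big_le; auto].
      exists (fun x => x). split; auto.
Qed.
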